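(* Let $m_j(x,y)=x^{k_j}y^{l_j}$, $j=1,\dots,q$, be monomials with nonnegative integer exponents, and let $f(x,y)=c_1m_1(x,y)+\cdots+c_qm_q(x,y)$ with real coefficients satisfying $|c_j|\le1$ for $j=1,\dots,q$. Let $\delta>0$ and for $i=1,\dots,N$ let $$S_i=\{(x,y)\mid x=x_i>0,\ 0<y_i-\delta\le y\le y_i+\delta\}$$ be vertical segments, and suppose that for every $i$ the curve $f=0$ passes through $S_i$ (i.e. $f$ vanishes at some point of $S_i$). Then $$\sum_{i=1}^N f(x_i,y_i)^2\le \delta^2\,q\sum_{i=1}^N h(x_i,y_i+\delta),\qquad\text{where } h(x,y)=\sum_{j=1}^q\Big(\frac{\partial m_j(x,y)}{\partial y}\Big)^2.$$ *)

(* Defs.v *)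
From HB Require Import structures.
From mathcomp Require Import all_boot all_order all_algebra.
Set Implicit Arguments. Unset Strict Implicit. Unset Printing Implicit Defensive.
Import Order.TTheory GRing.Theory Num.Theory.
Local Open Scope ring_scope.

Definition monom {R : realFieldType} (k l : nat) (x y : R) : R := x ^+ k * y ^+ l.

(* Partial derivative in y of the monomial x^k y^l, evaluated at (x,y):
   the formal derivative of the polynomial (x^k) 'X^l in the variable y. *)
Definition dmonom_dy {R : realFieldType} (k l : nat) (x y : R) : R :=
  (((x ^+ k)%:P * 'X^l)^`()).[y].

Definition fpoly {R : realFieldType} (q : nat) (c : 'I_q -> R) (k l : 'I_q -> nat)
  (x y : R) : R := \sum_(j < q) c j * monom (k j) (l j) x y.

Definition hfun {R : realFieldType} (q : nat) (k l : 'I_q -> nat) (x y : R) : R :=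
  \sum_(j < q) (dmonom_dy (k j) (l j) x y) ^+ 2.

(* Main.v *)
Require Import Defs.
From HB Require Import structures.
From mathcomp Require Import all_boot all_order all_algebra.
From mathcomp Require Import ring lra.
Import Order.TTheory GRing.Theory Num.Theory.
Local Open Scope ring_scope.

Lemma dmonomE (R : realFieldType) k l (x y : R) :
  dmonom_dy k l x y = x ^+ k * (y ^+ l.-1 *+ l).
Proof.
by rewrite /dmonom_dy mul_polyC derivZ derivXn hornerZ hornerMn hornerXn.
Qed.

Lemma powdiff (R : realFieldType) (a b y : R) n :
  0 <= a <= y -> 0 <= b <= y ->
  `|a ^+ n.+1 - b ^+ n.+1| <= `|a - b| * (n.+1%:R * y ^+ n).
Proof.
move=> /andP[a0 ay] /andP[b0 bY].
elim: n => [|n IH]; first by rewrite !expr1 expr0 mulr1 mulr1.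
have -> : a ^+ n.+2 - b ^+ n.+2 = a * (a ^+ n.+1 - b ^+ n.+1) + b ^+ n.+1 * (a - b).
  by rewrite !exprS; ring.
apply: (le_trans (ler_normD _ _)).
rewrite !normrM (ger0_norm a0) (ger0_norm (exprn_ge0 _ b0)).
have h1 : a * `|a ^+ n.+1 - b ^+ n.+1| <= y * (`|a - b| * (n.+1%:R * y ^+ n)).
  apply: ler_pM => //; exact: normr_ge0.
have h2 : b ^+ n.+1 * `|a - b| <= y ^+ n.+1 * `|a - b|.
  apply: ler_wpM2r; first exact: normr_ge0.
  by apply: lerXn2r; rewrite ?nnegrE // (le_trans b0).
apply: (le_trans (lerD h1 h2)).
rewrite -[n.+2]addn1 natrD exprS; rewrite le_eqVlt; apply/orP; left; apply/eqP; ring.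
Qed.

Lemma amgm (R : realFieldType) (u v : R) : u * v <= (u ^+ 2 + v ^+ 2) / 2.
Proof.
have h := sqr_ge0 (u - v).
rewrite ler_pdivlMr ?ltr0Sn // -subr_ge0.
have -> : (u ^+ 2 + v ^+ 2 - u * v * 2) = (u - v) ^+ 2 by ring.
exact h.
Qed.
Lemma cs (R : realFieldType) q (a : 'I_q -> R) :
  (\sum_(j < q) a j) ^+ 2 <= q%:R * \sum_(j < q) a j ^+ 2.
Proof.
rewrite expr2 mulr_suml.
under eq_bigr => j _ do rewrite mulr_sumr.
apply: (le_trans (y := \sum_(j < q) \sum_(i < q) (a j ^+ 2 + a i ^+ 2) / 2)).
  apply: ler_sum => j _; apply: ler_sum => i _; exact: amgm.
under eq_bigr => j _ do rewrite -mulr_suml big_split /=.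
rewrite -mulr_suml big_split /= exchange_big /= -big_split /=.
set S := \sum_(j < q) a j ^+ 2.
rewrite sumr_const card_ord -mulr_natl -mulr2n.
rewrite -mulrnA mulr1 -[S *+ _]mulr_natr natrM.
rewrite le_eqVlt; apply/orP; left; apply/eqP.
clearbody S; move: (q%:R) => Q.
field; done.
Qed.


Theorem theorem2 (R : realFieldType) (q : nat) (k l : 'I_q -> nat) (c : 'I_q -> R)
  (hc : forall j, `|c j| <= 1) (delta : R) (hdelta : 0 < delta)
  (N : nat) (x y : 'I_N -> R)
  (hx : forall i, 0 < x i) (hy : forall i, 0 < y i - delta)
  (hS : forall i, exists t : R,
          y i - delta <= t /\ t <= y i + delta /\ fpoly c k l (x i) t = 0) :
  \sum_(i < N) (fpoly c k l (x i) (y i)) ^+ 2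
    <= delta ^+ 2 * q%:R * \sum_(i < N) hfun k l (x i) (y i + delta).
Proof.
rewrite mulr_sumr; apply: ler_sum => i _.
have [t [t1 [t2 ft]]] := hS i.
have hyi := hy i; have hxi := hx i.
set D := fun j => dmonom_dy (k j) (l j) (x i) (y i + delta).
have D0 : forall j, 0 <= D j.
  move=> j; rewrite /D dmonomE; apply: mulr_ge0; first exact: exprn_ge0 (ltW hxi).
  by apply: mulrn_wge0; apply: exprn_ge0; lra.
have key : `|fpoly c k l (x i) (y i)| <= delta * \sum_(j < q) D j.
  have -> : fpoly c k l (x i) (y i) = fpoly c k l (x i) (y i) - fpoly c k l (x i) t by rewrite ft subr0.
  rewrite /fpoly -sumrB mulr_sumr.
  apply: (le_trans (ler_norm_sum _ _ _)); apply: ler_sum => j _.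
  rewrite /monom -mulrBr -mulrBr normrM normrM (gtr0_norm (exprn_gt0 _ hxi)).
  rewrite -[X in _ <= X]mul1r.
  have hb : `|(y i) ^+ l j - t ^+ l j| <= delta * ((y i + delta) ^+ (l j).-1 *+ l j).
    case E: (l j) => [|n]; first by rewrite !expr0 subrr normr0 mulr0n mulr0.
    have hA : 0 <= y i <= y i + delta by apply/andP; split; lra.
    have hB : 0 <= t <= y i + delta by apply/andP; split; lra.
    apply: (le_trans (@powdiff R (y i) t (y i + delta) n hA hB)).
    have hn : `|y i - t| <= delta by rewrite ler_norml; apply/andP; split; lra.
    have P0 : 0 <= n.+1%:R * (y i + delta) ^+ n.
      by apply: mulr_ge0 => //; apply: exprn_ge0; lra.
    apply: (le_trans (ler_wpM2r P0 hn)).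
    by rewrite /= ?mulr1 mulr_natl.
  have := D0 j; rewrite /D dmonomE => Dj.
  apply: ler_pM; [exact: normr_ge0| |exact: hc|].
    by apply: mulr_ge0; [exact: exprn_ge0 (ltW hxi) | exact: normr_ge0].
  rewrite mulrCA; apply: ler_wpM2l; first exact: exprn_ge0 (ltW hxi).
  exact: hb.
have S0 : 0 <= delta * \sum_(j < q) D j.
  by apply: mulr_ge0; [lra | apply: sumr_ge0 => j _; exact: D0].
apply: (le_trans (y := (delta * \sum_(j < q) D j) ^+ 2)).
  rewrite -real_normK ?num_real //; apply: lerXn2r; rewrite ?nnegrE //; exact: normr_ge0.
rewrite exprMn -mulrA ler_wpM2l ?exprn_ge0 ?(ltW hdelta) //.
exact: cs.
Qed.
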